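(* Let ${\mathcal M}$ be a $q$-matroid on $\mathbb{F}_q^n$ of rank $k$ with $0<k<n$. Then there is no nonzero vector $x\in\mathbb{F}_q^n$ that belongs to every basis of ${\mathcal M}$.
   Context: A $q$-matroid is a pair $(E,\rho)$, $E=\mathbb{F}_q^n$, with $\rho$ from the set of subspaces of $E$ to $\mathbb{Z}_{\ge0}$ satisfying $0\le\rho(X)\le\dim X$, $\rho(X)\le\rho(Y)$ for $X\subseteq Y$, and $\rho(X+Y)+\rho(X\cap Y)\le\rho(X)+\rho(Y)$; its rank is $\rho(E)$. A subspace $U$ is independent if $\rho(U)=\dim U$, and a basis is an independent subspace not strictly contained in any independent subspace. *)

(* Defs.v *)
From HB Require Import structures.
From mathcomp Require Import all_boot all_order all_algebra all_field.
Set Implicit Arguments. Unset Strict Implicit. Unset Printing Implicit Defensive.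
Import GRing.Theory.
Local Open Scope ring_scope.


Definition is_qmatroid (F : finFieldType) (n : nat)
    (rho : {vspace 'rV[F]_n} -> nat) : Prop :=
  [/\ (forall X : {vspace 'rV[F]_n}, (0 <= rho X <= \dim X)%N),
      (forall X Y : {vspace 'rV[F]_n}, (X <= Y)%VS -> (rho X <= rho Y)%N) &
      (forall X Y : {vspace 'rV[F]_n},
          (rho (X + Y)%VS + rho (X :&: Y)%VS <= rho X + rho Y)%N)].

Definition qm_rank (F : finFieldType) (n : nat)
    (rho : {vspace 'rV[F]_n} -> nat) : nat := rho fullv.

Definition qm_indep (F : finFieldType) (n : nat)
    (rho : {vspace 'rV[F]_n} -> nat) (U : {vspace 'rV[F]_n}) : Prop :=
  rho U = \dim U.

Definition qm_basis (F : finFieldType) (n : nat)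
    (rho : {vspace 'rV[F]_n} -> nat) (B : {vspace 'rV[F]_n}) : Prop :=
  qm_indep rho B /\
  ~ (exists V : {vspace 'rV[F]_n}, qm_indep rho V /\ (B <= V)%VS /\ B != V).

(* Main.v *)
Require Import Defs.
From HB Require Import structures.
From mathcomp Require Import all_boot all_order all_algebra all_field.
From mathcomp Require Import zify.
From Stdlib Require Import Classical.
Import GRing.Theory.
Local Open Scope ring_scope.

Lemma nat_aux a b c d e : (a + b <= c + d -> e <= b -> c <= e -> d <= e -> a <= e)%N.
Proof. lia. Qed.

Section Aux.
Variables (K : fieldType) (vT : vectType K).
Implicit Types U W : {vspace vT}.

Lemma dim_add_line_le U (v : vT) : (\dim (U + <[v]>) <= (\dim U).+1)%N.
Proof.
have := dimv_sum_cap U <[v]>; rewrite dim_vline.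
case: (v != 0) => /=; lia.
Qed.

Lemma dim_add_line_eq U (v : vT) : v \notin U -> \dim (U + <[v]>) = (\dim U).+1.
Proof.
move=> vU.
have sub := addvSl U <[v]>.
have vin : v \in (U + <[v]>)%VS by rewrite memvE (subv_trans (memv_line v) (addvSr _ _)).
have neq : U != (U + <[v]>)%VS by apply/eqP => E; rewrite -E in vin; rewrite vin in vU.
have := dimv_leqif_eq sub => [[le eqq]].
have := @dim_add_line_le U v.
move: neq; rewrite -eqq => neq.
move: le neq; lia.
Qed.

Lemma dim_lt_sub U W : (U <= W)%VS -> U != W -> (\dim U < \dim W)%N.
Proof.
move=> sub neq; have [le eqq] := dimv_leqif_eq sub.
by rewrite ltn_neqAle le eqq neq.
Qed.

Lemma not_full_ex U : U != fullv -> exists v, v \notin U.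
Proof.
move=> Uf; apply: NNPP => H; move/negP: Uf; apply.
rewrite eqEsubv subvf /=; apply/subvP => v _.
apply: NNPP => Hv; apply: H; exists v; exact/negP.
Qed.

Lemma union_ex U W : U != fullv -> W != fullv -> exists v, v \notin U /\ v \notin W.
Proof.
move=> /not_full_ex [a aU] /not_full_ex [b bW].
case aW: (a \in W); last by exists a; rewrite aW.
case bU: (b \in U); last by exists b; rewrite bU.
exists (a + b); split; apply/negP => H.
- by move: aU; rewrite -(addrK b a) memvB.
- by move: bW; rewrite -(addKr a b) memvD // memvN.
Qed.

End Aux.

Theorem lemma5p4 (F : finFieldType) (n : nat)
    (rho : {vspace 'rV[F]_n} -> nat) (k : nat) :
  is_qmatroid rho -> qm_rank rho = k -> (0 < k)%N -> (k < n)%N ->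
  ~ (exists x : 'rV[F]_n,
        x != 0 /\ (forall B : {vspace 'rV[F]_n}, qm_basis rho B -> x \in B)).
Proof.
move=> [Hb Hm Hs] Hk k0 kn [x [x0 Hx]].
rewrite /qm_rank in Hk.
have dn : dim 'rV[F]_n = n by rewrite dim_matrix; exact: mul1n.
have dimle : forall W : {vspace 'rV[F]_n}, (\dim W <= n)%N.
  by move=> W; have := dimvS (subvf W); rewrite dimvf dn.
have dimf : \dim (fullv : {vspace 'rV[F]_n}) = n by rewrite dimvf dn.
pose P (V : {vspace 'rV[F]_n}) := qm_indep rho V /\ x \notin V.
have [V [[HVi HVx] Vmax]] : exists V, P V /\ forall W, P W -> (\dim W <= \dim V)%N.
  suff: forall m V, P V -> (n - \dim V <= m)%N ->
      exists V, P V /\ forall W, P W -> (\dim W <= \dim V)%N.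
    move=> /(_ n 0%VS); apply; last by rewrite dimv0 subn0.
    split; last by rewrite memv0.
    by rewrite /qm_indep; have := Hb 0%VS; rewrite dimv0; lia.
  elim=> [|m IH] V0 PV0 Hm0.
    by exists V0; split => // W _; have := dimle W; lia.
  case: (classic (exists W, P W /\ (\dim V0 < \dim W)%N)).
    move=> [W [PW lt]]; apply: (IH W PW); have := dimle W; lia.
  move=> H; exists V0; split => // W PW.
  rewrite leqNgt; apply/negP => lt; apply: H; by exists W.
have [W [HWi [VW nVW]]] : exists W, qm_indep rho W /\ (V <= W)%VS /\ V != W.
  apply: NNPP => H; apply/negP: HVx; rewrite negbK; apply: Hx; by split.
have dVW : (\dim V < \dim W)%N.
  exact: dim_lt_sub.
have dWk : (\dim W <= k)%N by rewrite -HWi -Hk; apply: Hm; exact: subvf.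
have Vx_nf : (V + <[x]>)%VS != fullv.
  apply/eqP => E; have := @dim_add_line_le _ _ V x; rewrite E dimf; lia.
have [y [yVx lty]] : exists y, y \notin (V + <[x]>)%VS /\ (rho V < rho (V + <[y]>)%VS)%N.
  apply: NNPP => H.
  have Hy : forall y, y \notin (V + <[x]>)%VS -> (rho (V + <[y]>)%VS <= rho V)%N.
    move=> y yn; rewrite leqNgt; apply/negP => lt; apply: H; by exists y.
  suff: forall m Z, (V <= Z)%VS -> (rho Z <= rho V)%N -> (n - \dim Z <= m)%N ->
      (rho fullv <= rho V)%N.
    move=> /(_ n V (subvv V) (leqnn _)) H1.
    have := H1 (leq_subr _ _); rewrite Hk HVi; lia.
  elim=> [|m IH] Z VZ rZ dZ.
    have -> : fullv = Z; last done.
    apply/eqP; rewrite eq_sym eqEdim subvf dimf; lia.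
  case: (eqVneq Z fullv) => [E|Znf]; first by rewrite -E.
  have [y [yZ yVx]] := @union_ex _ _ _ _ Znf Vx_nf.
  pose Z' := (Z + (V + <[y]>))%VS.
  have ZZ' : (Z <= Z')%VS by exact: addvSl.
  have yZ' : y \in Z'.
    by rewrite memvE (subv_trans (memv_line y) (subv_trans (addvSr V _) (addvSr _ _))).
  have ZneZ' : Z != Z' by apply/eqP => E; move: yZ'; rewrite -E (negbTE yZ).
  have dZZ' : (\dim Z < \dim Z')%N.
    exact: dim_lt_sub.
  apply: (IH Z').
  - exact: subv_trans VZ ZZ'.
  - have h1 := Hs Z (V + <[y]>)%VS.
    have h2 : (rho V <= rho (Z :&: (V + <[y]>))%VS)%N.
      by apply: Hm; rewrite subv_cap VZ addvSl.
    have h3 := Hy y yVx.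
    exact: nat_aux h1 h2 rZ h3.
  - clearbody Z'; have := dimle Z'; lia.
have yV : y \notin V.
  apply/negP => yV; move/negP: yVx; apply.
  exact: (subvP (addvSl V <[x]>)).
have xV' : x \notin V by [].
have dVy := @dim_add_line_eq _ _ _ _ yV.
have rVy : rho (V + <[y]>)%VS = (\dim V).+1.
  have h1 := Hs V <[y]>%VS.
  have h2 := Hb <[y]>%VS; rewrite dim_vline in h2.
  have h3 := Hb (V + <[y]>)%VS.
  rewrite /qm_indep in HVi.
  move: h2; case: (y != 0) => /= h2; move: h1 h3; rewrite dVy; lia.
have PVy : P (V + <[y]>)%VS.
  split; first by rewrite /qm_indep rVy dVy.
  apply/negP => xin.
  have sub : (V + <[x]> <= V + <[y]>)%VS by rewrite subv_add addvSl -memvE.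
  have := @dim_add_line_eq _ _ _ _ HVx; rewrite -dVy => dd.
  have : (V + <[x]>)%VS == (V + <[y]>)%VS by rewrite eqEdim sub dd leqnn.
  move/eqP => E; move/negP: yVx; apply; rewrite E memvE.
  exact: subv_trans (memv_line y) (addvSr _ _).
have := Vmax _ PVy; rewrite dVy; lia.
Qed.
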